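(* With notation as in the context, $\mathrm{REL}(\Gamma)=\mathrm{REL}_{\mathcal{W}}$.
   Context: $\Gamma$ is a geometrically finite, non-cocompact Fuchsian group acting on the upper half-plane $\mathbb{H}$, containing hyperbolic but no parabolic elements, with $\Gamma\backslash\mathbb{H}$ of infinite area, and whose ordinary set contains a neighborhood of $\infty$. For $g=\begin{bmatrix}a&b\\c&d\end{bmatrix}\in\mathrm{PSL}_2(\mathbb{R})$ with $c\neq0$ let $\mathrm{I}(g)=\{z\in\mathbb{H}:|cz+d|=1\}$ and $\mathrm{ext}\,\mathrm{I}(g)=\{z:|cz+d|>1\}$. Let $\mathcal{K}=\bigcap_{g\in\Gamma\setminus\{\mathrm{id}\}}\mathrm{ext}\,\mathrm{I}(g)$ and $\mathrm{REL}(\Gamma)$ the set of $\mathrm{I}(g)$, $g\in\Gamma\setminus\{\mathrm{id}\}$, such that $\mathrm{I}(g)\cap\partial\mathcal{K}$ contains more than one point ($\partial$ = boundary in $\mathbb{H}$); $\Gamma_{\mathrm{REL}}$ is the set of such $g$. With $\mathrm{pr}_\infty(x+iy)=x$, let $\alpha$ (resp. $\beta$) be the largest (resp. smallest) real number with $\partial\mathcal{K}\subseteq\mathrm{pr}_\infty^{-1}([\alpha,\beta])$, fix $\alpha'<\alpha$, $\beta'>\beta$, $\lambda=\beta'-\alpha'$, $t_\lambda=\begin{bmatrix}1&\lambda\\0&1\end{bmatrix}$, $\mathcal{W}=\mathcal{K}\cap\mathrm{pr}_\infty^{-1}((\alpha',\beta'))$, and $\Gamma_{\mathcal{W}}$ the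 group generated by $\Gamma_{\mathrm{REL}}\cup\{t_\lambda\}$ (a Fuchsian group). $\mathrm{REL}_{\mathcal{W}}$ is the set of isometric spheres $\mathrm{I}(g)$, $g\in\Gamma_{\mathcal{W}}$ not fixing $\infty$, such that $\mathrm{I}(g)\cap\partial\mathcal{W}$ contains more than one point. *)

(* Defs.v *)
From Stdlib Require List.
From HB Require Import structures.
From mathcomp Require Import all_boot all_order all_algebra.
From mathcomp Require Import all_classical all_reals all_analysis.
Set Implicit Arguments. Unset Strict Implicit. Unset Printing Implicit Defensive.
Import Order.TTheory GRing.Theory Num.Theory.
Import numFieldNormedType.Exports.
Local Open Scope classical_set_scope.
Local Open Scope ring_scope.

Section Hyperbolic.
Variable R : realType.

(* Points of the plane C = R^2 are pairs (x, y) = x + i y; the upper half-plane. *)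
Definition uhp : set (R * R) := [set p | 0 < p.2].

Definition ma (g : 'M[R]_2) := g ord0 ord0.
Definition mb (g : 'M[R]_2) := g ord0 ord_max.
Definition mc (g : 'M[R]_2) := g ord_max ord0.
Definition md (g : 'M[R]_2) := g ord_max ord_max.

(* Moebius action z |-> (a z + b) / (c z + d), written out in coordinates:
   (az+b)(c zbar + d) / |cz+d|^2. *)
Definition mob (g : 'M[R]_2) (p : R * R) : R * R :=
  let D := (mc g * p.1 + md g) ^+ 2 + (mc g * p.2) ^+ 2 in
  (((ma g * p.1 + mb g) * (mc g * p.1 + md g) + ma g * mc g * p.2 ^+ 2) / D,
   (ma g * md g - mb g * mc g) * p.2 / D).

Definition psl_id (g : 'M[R]_2) : Prop := g = 1 \/ g = - 1.

(* A subgroup of PSL_2(R) is represented by its full preimage in SL_2(R). *)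
Record psl_subgroup (G : set 'M[R]_2) : Prop := {
  psl_det : forall g, G g -> \det g = 1;
  psl_one : G 1;
  psl_mul : forall g h, G g -> G h -> G (g *m h);
  psl_inv : forall g, G g -> G (invmx g);
  psl_opp : forall g, G g -> G (- g) }.

Definition fuchsian (G : set 'M[R]_2) : Prop :=
  psl_subgroup G /\
  forall g, G g -> exists2 e : R, 0 < e &
    forall h, G h -> (forall i j, `|h i j - g i j| < e) -> h = g.

(* Closure/interior in R^2; boundary relative to the upper half-plane. *)
Definition bdH (A : set (R * R)) : set (R * R) :=
  uhp `&` (closure A `\` interior A).

(* Fundamental region in the sense of Katok (Fuchsian groups, 3.1). *)
Definition fundamental_region (G : set 'M[R]_2) (F : set (R * R)) : Prop :=
  [/\ F `<=` uhp, open F,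
      (forall g, G g -> ~ psl_id g -> (mob g @` F) `&` F = set0) &
      (forall z, uhp z -> exists g, exists w,
          [/\ G g, (closure F `&` uhp) w & mob g w = z])].

Inductive halfplane :=
  | HPright of R
  | HPleft of R
  | HPout of R & R
  | HPin of R & R.

Definition hp_ok (h : halfplane) : Prop :=
  match h with HPout _ r | HPin _ r => 0 < r | _ => True end.

Definition hp_set (h : halfplane) : set (R * R) :=
  match h with
  | HPright x0 => [set p | uhp p /\ x0 < p.1]
  | HPleft x0 => [set p | uhp p /\ p.1 < x0]
  | HPout c r => [set p | uhp p /\ r ^+ 2 < (p.1 - c) ^+ 2 + p.2 ^+ 2]
  | HPin c r => [set p | uhp p /\ (p.1 - c) ^+ 2 + p.2 ^+ 2 < r ^+ 2]
  end.

(* Geometrically finite: there is a convex fundamental region with finitely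
   many sides, i.e. a nonempty finite intersection of hyperbolic half-planes. *)
Definition geom_finite (G : set 'M[R]_2) : Prop :=
  exists s : seq halfplane, (forall h, List.In h s -> hp_ok h) /\
    let F := uhp `&` [set p | forall h, List.In h s -> hp_set h p] in
    F !=set0 /\ fundamental_region G F.

(* Gamma\H compact iff some compact subset of H meets every orbit. *)
Definition cocompact (G : set 'M[R]_2) : Prop :=
  exists C : set (R * R), [/\ compact C, C `<=` uhp &
    forall z, uhp z -> exists g w, [/\ G g, C w & mob g w = z]].

Definition leb2 := ((@lebesgue_measure R) \x (@lebesgue_measure R))%E.

Definition hyp_area (F : set (R * R)) : \bar R :=
  (\int[leb2]_(p in F) ((p.2 ^+ 2)^-1)%:E)%E.

(* Gamma\H has infinite area: the hyperbolic area of a fundamental region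
   (with null boundary) is infinite. *)
Definition infinite_area (G : set 'M[R]_2) : Prop :=
  forall F, fundamental_region G F ->
    leb2 (closure F `\` interior F) = 0%E -> hyp_area F = +oo%E.

Definition hyperbolic (g : 'M[R]_2) : Prop := 2 < `|\tr g|.
Definition parabolic (g : 'M[R]_2) : Prop := `|\tr g| = 2 /\ ~ psl_id g.

(* Limit set in R \cup {oo} (None = oo): accumulation points of an orbit
   along a sequence of distinct elements of PSL_2. *)
Definition limit_point (G : set 'M[R]_2) (xi : option R) : Prop :=
  exists z, uhp z /\ exists gs : nat -> 'M[R]_2,
    [/\ (forall n, G (gs n)),
        (forall n m, n <> m -> gs n <> gs m /\ gs n <> - gs m) &
        match xi with
        | Some x => (fun n => mob (gs n) z) @ \oo --> (x, 0)
        | None => forall M : R, \forall n \near \oo,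
                    M < (mob (gs n) z).1 ^+ 2 + (mob (gs n) z).2 ^+ 2
        end].

Definition ordinary (G : set 'M[R]_2) (xi : option R) : Prop := ~ limit_point G xi.

Definition ordinary_nbhs_infty (G : set 'M[R]_2) : Prop :=
  exists M : R, ordinary G None /\ forall x : R, M < `|x| -> ordinary G (Some x).

(* Isometric spheres (for c <> 0) *)
Definition isom_sphere (g : 'M[R]_2) : set (R * R) :=
  [set z | uhp z /\ (mc g * z.1 + md g) ^+ 2 + (mc g * z.2) ^+ 2 = 1].
Definition isom_ext (g : 'M[R]_2) : set (R * R) :=
  [set z | uhp z /\ 1 < (mc g * z.1 + md g) ^+ 2 + (mc g * z.2) ^+ 2].

Definition Kset (G : set 'M[R]_2) : set (R * R) :=
  [set z | uhp z /\ forall g, G g -> ~ psl_id g -> mc g != 0 -> isom_ext g z].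

Definition more_than_one (S : set (R * R)) : Prop :=
  exists z w, [/\ S z, S w & z <> w].

Definition Gamma_REL (G : set 'M[R]_2) : set 'M[R]_2 :=
  [set g | [/\ G g, ~ psl_id g, mc g != 0 &
              more_than_one (isom_sphere g `&` bdH (Kset G))]].

Definition REL (G : set 'M[R]_2) : set (set (R * R)) :=
  [set S | exists g, Gamma_REL G g /\ S = isom_sphere g].

(* t_l = [1 l; 0 1] *)
Definition transl (l : R) : 'M[R]_2 := 1%:M + l *: delta_mx ord0 ord_max.

(* subgroup of PSL_2(R) generated by S (full preimage in SL_2(R)) *)
Inductive gen (S : set 'M[R]_2) : 'M[R]_2 -> Prop :=
  | gen_base g : S g -> gen S g
  | gen_one : gen S 1
  | gen_opp g : gen S g -> gen S (- g)
  | gen_mul g h : gen S g -> gen S h -> gen S (g *m h)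
  | gen_inv g : gen S g -> gen S (invmx g).

Definition Wset (G : set 'M[R]_2) (a' b' : R) : set (R * R) :=
  Kset G `&` [set z | a' < z.1 < b'].

Definition Gamma_W (G : set 'M[R]_2) (a' b' : R) : set 'M[R]_2 :=
  gen (Gamma_REL G `|` [set transl (b' - a')]).

Definition REL_W (G : set 'M[R]_2) (a' b' : R) : set (set (R * R)) :=
  [set S | exists g, [/\ Gamma_W G a' b' g, mc g != 0,
             more_than_one (isom_sphere g `&` bdH (Wset G a' b')) &
             S = isom_sphere g]].

End Hyperbolic.

(* Main.v *)
Require Import Defs.
From HB Require Import structures.
From mathcomp Require Import all_boot all_order all_algebra.
From mathcomp Require Import all_classical all_reals all_analysis.
From mathcomp Require Import ring lra.
Import Order.TTheory GRing.Theory Num.Theory.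
Import numFieldNormedType.Exports.
Local Open Scope classical_set_scope.
Local Open Scope ring_scope.
Set Implicit Arguments. Unset Strict Implicit. Unset Printing Implicit Defensive.
From mathcomp Require Import boolp.

Section A.
Variable R : realType.
Implicit Types g h : 'M[R]_2.

Lemma ord2_cases (i : 'I_2) : i = ord0 \/ i = ord_max.
Proof.
case: i => [[|[|i]] Hi].
- by left; apply: val_inj.
- by right; apply: val_inj.
- by [].
Qed.

Lemma mat2_eq g h : ma g = ma h -> mb g = mb h -> mc g = mc h -> md g = md h -> g = h.
Proof.
move=> ha hb hc hd; apply/matrixP => i j.
by case: (ord2_cases i) => ->; case: (ord2_cases j) => ->.
Qed.

Lemma all4 (P : R -> Prop) g : P (ma g) -> P (mb g) -> P (mc g) -> P (md g) ->
  forall i j, P (g i j).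
Proof.
move=> ha hb hc hd i j.
by case: (ord2_cases i) => ->; case: (ord2_cases j) => ->.
Qed.

Lemma sum2 (F : 'I_2 -> R) : \sum_(i < 2) F i = F ord0 + F ord_max.
Proof. by rewrite big_ord_recl big_ord1; congr (_ + F _); apply: val_inj. Qed.

Lemma maM g h : ma (g *m h) = ma g * ma h + mb g * mc h.
Proof. by rewrite /ma !mxE sum2. Qed.
Lemma mbM g h : mb (g *m h) = ma g * mb h + mb g * md h.
Proof. by rewrite /mb !mxE sum2. Qed.
Lemma mcM g h : mc (g *m h) = mc g * ma h + md g * mc h.
Proof. by rewrite /mc !mxE sum2. Qed.
Lemma mdM g h : md (g *m h) = mc g * mb h + md g * md h.
Proof. by rewrite /md !mxE sum2. Qed.

Lemma ma1 : ma (1 : 'M[R]_2) = 1. Proof. by rewrite /ma !mxE. Qed.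
Lemma mb1 : mb (1 : 'M[R]_2) = 0. Proof. by rewrite /mb !mxE. Qed.
Lemma mc1 : mc (1 : 'M[R]_2) = 0. Proof. by rewrite /mc !mxE. Qed.
Lemma md1 : md (1 : 'M[R]_2) = 1. Proof. by rewrite /md !mxE. Qed.

Lemma maN g : ma (- g) = - ma g. Proof. by rewrite /ma !mxE. Qed.
Lemma mbN g : mb (- g) = - mb g. Proof. by rewrite /mb !mxE. Qed.
Lemma mcN g : mc (- g) = - mc g. Proof. by rewrite /mc !mxE. Qed.
Lemma mdN g : md (- g) = - md g. Proof. by rewrite /md !mxE. Qed.

Lemma det2 g : \det g = ma g * md g - mb g * mc g.
Proof.
rewrite (expand_det_row g ord0) sum2 /cofactor !det_mx11 /ma /mb /mc /md.
rewrite !mxE /=.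
have -> : lift ord0 (0 : 'I_1) = ord_max :> 'I_2 by apply: val_inj.
have -> : lift ord_max (0 : 'I_1) = ord0 :> 'I_2 by apply: val_inj.
rewrite expr0 expr1 /=; ring.
Qed.


Lemma tr2 g : \tr g = ma g + md g.
Proof. by rewrite /mxtrace sum2. Qed.

Lemma ma_tr (l : R) : ma (transl l) = 1. Proof. by rewrite /ma /transl !mxE /=; ring. Qed.
Lemma mb_tr (l : R) : mb (transl l) = l. Proof. by rewrite /mb /transl !mxE /=; ring. Qed.
Lemma mc_tr (l : R) : mc (transl l) = 0. Proof. by rewrite /mc /transl !mxE /=; ring. Qed.
Lemma md_tr (l : R) : md (transl l) = 1. Proof. by rewrite /md /transl !mxE /=; ring. Qed.

Definition adjm g : 'M[R]_2 := \matrix_(i, j)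
  (match nat_of_ord i, nat_of_ord j with
   | 0, 0 => md g | 0, _ => - mb g | _, 0 => - mc g | _, _ => ma g end)%N.

Lemma ma_adj g : ma (adjm g) = md g. Proof. by rewrite /ma /adjm !mxE. Qed.
Lemma mb_adj g : mb (adjm g) = - mb g. Proof. by rewrite /mb /adjm !mxE. Qed.
Lemma mc_adj g : mc (adjm g) = - mc g. Proof. by rewrite /mc /adjm !mxE. Qed.
Lemma md_adj g : md (adjm g) = ma g. Proof. by rewrite /md /adjm !mxE. Qed.

Lemma mul_adj g : \det g = 1 -> g *m adjm g = 1.
Proof.
rewrite det2 => hd; apply: mat2_eq;
rewrite ?maM ?mbM ?mcM ?mdM ?ma_adj ?mb_adj ?mc_adj ?md_adj ?ma1 ?mb1 ?mc1 ?md1;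
first [by rewrite -hd; ring | by ring].
Qed.

Lemma unit_det1 g : \det g = 1 -> g \in unitmx.
Proof. by move=> h; rewrite unitmxE h unitr1. Qed.

Lemma invmx_adj g : \det g = 1 -> invmx g = adjm g.
Proof.
move=> hd; rewrite -[RHS]mul1mx -(mulVmx (unit_det1 hd)) -mulmxA mul_adj //.
by rewrite mulmx1.
Qed.

Definition Dm g (z : R * R) := (mc g * z.1 + md g) ^+ 2 + (mc g * z.2) ^+ 2.

Lemma Dm_pos g z : \det g = 1 -> 0 < z.2 -> 0 < Dm g z.
Proof.
rewrite det2 /Dm => hd hz.
have [c0|c0] := eqVneq (mc g) 0.
  have d0 : md g != 0.
    by apply/eqP => d0; move: hd; rewrite c0 d0 !mulr0 subr0 => /eqP; rewrite eq_sym oner_eq0.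
  have : 0 < md g ^+ 2 by rewrite exprn_even_gt0 // d0 orbT.
  rewrite c0 !mul0r add0r; nra.
have : 0 < (mc g * z.2) ^+ 2 by rewrite exprn_even_gt0 // mulf_neq0 // gt_eqF.
have := sqr_ge0 (mc g * z.1 + md g); lra.
Qed.

Lemma Dn_mul_id (A B C D a b c d x y : R) :
  (c * x + d) ^+ 2 + (c * y) ^+ 2 != 0 ->
  ((C*a + D*c) * x + (C*b+D*d)) ^+ 2 + ((C*a + D*c) * y) ^+ 2 =
  ((C * (((a * x + b) * (c * x + d) + a * c * y ^+ 2) / ((c * x + d) ^+ 2 + (c * y) ^+ 2)) + D) ^+ 2
   + (C * ((a * d - b * c) * y / ((c * x + d) ^+ 2 + (c * y) ^+ 2))) ^+ 2)
  * ((c * x + d) ^+ 2 + (c * y) ^+ 2).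
Proof. by move=> h; field. Qed.

Lemma Num_mul_id (A B C D a b c d x y : R) :
  (c * x + d) ^+ 2 + (c * y) ^+ 2 != 0 ->
  ((A*a + B*c) * x + (A*b+B*d)) * ((C*a + D*c) * x + (C*b+D*d))
    + (A*a + B*c) * (C*a + D*c) * y ^+ 2 =
  ((A * (((a * x + b) * (c * x + d) + a * c * y ^+ 2) / ((c * x + d) ^+ 2 + (c * y) ^+ 2)) + B) *
   (C * (((a * x + b) * (c * x + d) + a * c * y ^+ 2) / ((c * x + d) ^+ 2 + (c * y) ^+ 2)) + D)
   + A * C * ((a * d - b * c) * y / ((c * x + d) ^+ 2 + (c * y) ^+ 2)) ^+ 2)
  * ((c * x + d) ^+ 2 + (c * y) ^+ 2).
Proof. by move=> h; field. Qed.

Lemma Dm_mul g h z : Dm h z != 0 -> Dm (g *m h) z = Dm g (mob h z) * Dm h z.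
Proof. move=> hh; have := @Dn_mul_id (ma g) (mb g) (mc g) (md g) (ma h) (mb h) (mc h) (md h) z.1 z.2 hh.
by rewrite /Dm /mob /= mcM mdM. Qed.

Lemma mob_im g z : \det g = 1 -> (mob g z).2 = z.2 / Dm g z.
Proof. by move=> hd; rewrite /mob /= -det2 hd mul1r. Qed.

Lemma mob_uhp g z : \det g = 1 -> 0 < z.2 -> 0 < (mob g z).2.
Proof. by move=> hd hz; rewrite mob_im // divr_gt0 // Dm_pos. Qed.

Lemma mobM g h z : \det g = 1 -> \det h = 1 -> 0 < z.2 ->
  mob (g *m h) z = mob g (mob h z).
Proof.
move=> hg hh hz.
have Dh : 0 < Dm h z := Dm_pos hh hz.
have Dg : 0 < Dm g (mob h z) := Dm_pos hg (mob_uhp hh hz).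
have hgh : \det (g *m h) = 1 by rewrite det_mulmx hg hh mulr1.
have Dgh := @Dm_mul g h z (lt0r_neq0 Dh).
set w := mob h z.
set N1 := ((ma g * w.1 + mb g) * (mc g * w.1 + md g) + ma g * mc g * w.2 ^+ 2).
have E2 : (mob g w).1 = N1 / Dm g w by [].
set N2 := ((ma (g *m h) * z.1 + mb (g *m h)) * (mc (g *m h) * z.1 + md (g *m h))
   + ma (g *m h) * mc (g *m h) * z.2 ^+ 2).
have E1 : (mob (g *m h) z).1 = N2 / Dm (g *m h) z by [].
have E3 : N2 = N1 * Dm h z.
  rewrite /N2 /N1 maM mbM mcM mdM.
  exact: (@Num_mul_id (ma g) (mb g) (mc g) (md g) (ma h) (mb h) (mc h) (md h) z.1 z.2 (lt0r_neq0 Dh)).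
apply: injective_projections.
  rewrite E1 E2 E3 Dgh; field.
  by apply/andP; split; apply: lt0r_neq0.
rewrite mob_im // mob_im // mob_im // Dgh; field.
by apply/andP; split; apply: lt0r_neq0.
Qed.

Lemma mob_tr (l : R) z : mob (transl l) z = (z.1 + l, z.2).
Proof.
rewrite /mob ma_tr mb_tr mc_tr md_tr /=.
have -> : (0 * z.1 + 1) ^+ 2 + (0 * z.2) ^+ 2 = 1 :> R by ring.
by congr pair; field.
Qed.

Lemma mob_opp g z : mob (- g) z = mob g z.
Proof. by rewrite /mob maN mbN mcN mdN; congr pair; congr (_ / _); ring. Qed.

Lemma mob1 (z : R * R) : mob 1 z = z.
Proof.
rewrite /mob ma1 mb1 mc1 md1; case: z => x y /=.
have -> : (0 * x + 1) ^+ 2 + (0 * y) ^+ 2 = 1 :> R by ring.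
by congr pair; field.
Qed.

Lemma Dm_opp g z : Dm (- g) z = Dm g z.
Proof. by rewrite /Dm mcN mdN; ring. Qed.

End A.

Section B.
Variable R : realType.
Implicit Types g h : 'M[R]_2.

Lemma transl_det (l : R) : \det (transl l) = 1.
Proof. by rewrite det2 ma_tr mb_tr mc_tr md_tr; ring. Qed.

Lemma translD (a b : R) : transl a *m transl b = transl (a + b).
Proof.
by apply: mat2_eq; rewrite ?maM ?mbM ?mcM ?mdM !(ma_tr, mb_tr, mc_tr, md_tr); ring.
Qed.

Lemma transl0 : transl 0 = 1 :> 'M[R]_2.
Proof. by apply: mat2_eq; rewrite !(ma_tr, mb_tr, mc_tr, md_tr, ma1, mb1, mc1, md1). Qed.

Lemma pw_facts (eta : 'M[R]_2) (n : nat) :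
  mc eta = 0 ->
  let p := iter n (mulmx eta) 1 in
  [/\ mc p = 0, ma p = ma eta ^+ n & md p = md eta ^+ n].
Proof.
move=> c0; elim: n => [|n IH] /=.
  by rewrite mc1 ma1 md1 !expr0.
move: IH => [h1 h2 h3]; rewrite mcM maM mdM h1 h2 h3 c0 !exprS; split; ring.
Qed.

Variable G : set 'M[R]_2.
Hypothesis hF : fuchsian G.
Hypothesis hpar : forall g, G g -> ~ parabolic g.
Hypothesis hord0 : ordinary G None.

Let hS : psl_subgroup G := hF.1.

Lemma Gdet g : G g -> \det g = 1. Proof. exact: (psl_det hS). Qed.
Lemma G1 : G 1. Proof. exact: (psl_one hS). Qed.
Lemma Gmul g h : G g -> G h -> G (g *m h). Proof. exact: (psl_mul hS). Qed.
Lemma Gopp g : G g -> G (- g). Proof. exact: (psl_opp hS). Qed.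
Lemma Gadj g : G g -> G (adjm g).
Proof. by move=> hg; rewrite -invmx_adj ?Gdet //; exact: (psl_inv hS). Qed.

Lemma lp_contra (z : R * R) (gs : nat -> 'M[R]_2) : 0 < z.2 ->
  (forall n, G (gs n)) ->
  (forall n m, n <> m -> gs n <> gs m /\ gs n <> - gs m) ->
  (forall M : R, \forall n \near \oo,
      M < (mob (gs n) z).1 ^+ 2 + (mob (gs n) z).2 ^+ 2) -> False.
Proof.
move=> hz hG hd hM; apply: hord0; exists z; split => //; exists gs; split => //.
Qed.

Lemma bernoulli (h : R) (n : nat) : 0 <= h -> 1 + n%:R * h <= (1 + h) ^+ n.
Proof.
move=> h0; elim: n => [|n IH]; first by rewrite expr0 mul0r addr0.
rewrite exprS -natr1.
have n0 : 0 <= n%:R :> R by apply: ler0n.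
have : 0 <= n%:R * h * h by rewrite mulr_ge0 // mulr_ge0.
have : 0 <= ((1 + h) ^+ n - (1 + n%:R * h)) * (1 + h) by rewrite mulr_ge0 // ?subr_ge0 // addr_ge0.
nra.
Qed.

Lemma c0_big_contra eta : G eta -> mc eta = 0 -> 1 < ma eta ^+ 2 -> False.
Proof.
move=> hG c0 a1.
set gs := fun n => iter n (mulmx eta) 1.
have gsG : forall n, G (gs n).
  by elim => [|n IH] /=; [exact: G1 | exact: Gmul].
have hdet := Gdet hG; rewrite det2 c0 mulr0 subr0 in hdet.
have Hd : forall n, \det (gs n) = 1 by move=> n; exact: Gdet.
have Him : forall n, (mob (gs n) (0, 1)).2 = (ma eta ^+ 2) ^+ n.
  move=> n; have [h1 h2 h3] := pw_facts n c0; rewrite -/(gs n) in h1 h2 h3.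
  rewrite (mob_im _ (Hd n)) /Dm h1 h3 /= !mul0r add0r expr0n /= addr0.
  have e : (ma eta ^+ n) * (md eta ^+ n) = 1 by rewrite -exprMn hdet expr1n.
  have ne : md eta ^+ n != 0.
    by apply/eqP => h; move: e; rewrite h mulr0 => /eqP; rewrite eq_sym oner_eq0.
  have -> : (ma eta ^+ 2) ^+ n = (ma eta ^+ n) ^+ 2 by rewrite -!exprM mulnC.
  have -> : ma eta ^+ n = (md eta ^+ n)^-1 by apply: (mulIf ne); rewrite e mulVf.
  by rewrite exprVn div1r.
apply: (@lp_contra (0, 1) gs) => //.
- move=> n m nm; have inj : forall k l, (ma eta ^+ 2) ^+ k = (ma eta ^+ 2) ^+ l -> k = l.
    move=> k l; apply: ieexprIn; first by apply: lt_trans a1.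
    by rewrite gt_eqF.
  have [h1 h2 h3] := pw_facts n c0; have [k1 k2 k3] := pw_facts m c0.
  rewrite -/(gs n) in h1 h2 h3; rewrite -/(gs m) in k1 k2 k3.
  split => E; apply: nm; apply: inj.
    by rewrite -!exprM mulnC [(2 * m)%N]mulnC !exprM -h2 -k2 E.
  by rewrite -!exprM mulnC [(2 * m)%N]mulnC !exprM -h2 -k2 E maN sqrrN.
- move=> M.
  set h := ma eta ^+ 2 - 1.
  have hpos : 0 < h by rewrite /h subr_gt0.
  apply: filterS (nbhs_infty_ger (M / h)) => n hn.
  rewrite Him.
  have b := bernoulli n (ltW hpos).
  have e1 : 1 + h = ma eta ^+ 2 by rewrite /h addrC subrK.
  rewrite e1 in b.
  have : M < 1 + n%:R * h.
    have : M / h * h <= n%:R * h by rewrite ler_pM2r.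
    by rewrite divfK ?gt_eqF //; lra.
  have := sqr_ge0 (mob (gs n) (0, 1)).1.
  have y1 : 1 <= (ma eta ^+ 2) ^+ n by rewrite exprn_ege1 // ltW.
  nra.
Qed.

Lemma c0_triv g : G g -> mc g = 0 -> psl_id g.
Proof.
move=> hG c0.
have hdet := Gdet hG; rewrite det2 c0 mulr0 subr0 in hdet.
case: (ltgtP (ma g ^+ 2) 1) => ha.
- exfalso; apply: (@c0_big_contra (adjm g)); first exact: Gadj.
    by rewrite mc_adj c0 oppr0.
  rewrite ma_adj.
  have : 0 <= ma g ^+ 2 by apply: sqr_ge0.
  have e : ma g ^+ 2 * md g ^+ 2 = 1 by rewrite -exprMn hdet expr1n.
  nra.
- exfalso; exact: (@c0_big_contra g).
- apply: contrapT => hn; apply: (hpar hG); split => //.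
  rewrite tr2.
  move/eqP: ha; rewrite sqrf_eq1 => /orP [] /eqP ea.
    have ed : md g = 1 by rewrite -hdet ea mul1r.
    by rewrite ea ed ger0_norm.
  have ed : md g = -1 by rewrite -hdet ea mulN1r opprK.
  by rewrite ea ed -opprD normrN ger0_norm.
Qed.

End B.

Section P.
Variable R : realType.

Lemma floor_close (u v : R) : Num.floor u = Num.floor v -> `|u - v| < 1.
Proof.
move=> e.
have := floor_le u; have := floorD1_gt u; have := floor_le v; have := floorD1_gt v.
rewrite e intrD => h1 h2 h3 h4.
rewrite ltr_norml; apply/andP; split; lra.
Qed.

Definition cellK (Bd eps : R) := `|Num.floor (2 * Bd / eps)|%N.
Definition cell (Bd eps : R) (x : R) : 'I_(cellK Bd eps).+1 :=
  inord `|Num.floor ((x + Bd) / eps)|%N.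

Lemma cell_nat (Bd eps x : R) : 0 < eps -> `|x| <= Bd ->
  nat_of_ord (cell Bd eps x) = `|Num.floor ((x + Bd) / eps)|%N.
Proof.
move=> he hx; rewrite /cell inordK // ltnS /cellK.
move: (hx); rewrite ler_norml => /andP [hx1 hx2].
have h0 : 0 <= (x + Bd) / eps.
  by apply: divr_ge0; [lra | exact: ltW].
have h1 : (x + Bd) / eps <= 2 * Bd / eps.
  by rewrite ler_pM2r ?invr_gt0 //; lra.
have f0 : (0 <= Num.floor ((x + Bd) / eps))%R by rewrite floor_ge_int.
have f1 := le_floor h1.
have f2 : (0 <= Num.floor (2 * Bd / eps))%R by apply: le_trans f0 f1.
rewrite -lez_nat !gez0_abs //.
Qed.

Lemma cell_close (Bd eps x y : R) : 0 < eps -> `|x| <= Bd -> `|y| <= Bd ->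
  cell Bd eps x = cell Bd eps y -> `|x - y| < eps.
Proof.
move=> he hx hy e.
have := congr1 (@nat_of_ord _) e; rewrite !cell_nat // => e2.
have f0 : forall z : R, `|z| <= Bd -> (0 <= Num.floor ((z + Bd) / eps))%R.
  move=> z hz; rewrite floor_ge_int; apply: divr_ge0; last exact: ltW.
  by move: hz; rewrite ler_norml => /andP [? ?]; lra.
have e3 : Num.floor ((x + Bd) / eps) = Num.floor ((y + Bd) / eps).
  by rewrite -(gez0_abs (f0 _ hx)) -(gez0_abs (f0 _ hy)) e2.
have := floor_close e3.
have -> : (x + Bd) / eps - (y + Bd) / eps = (x - y) / eps by field; rewrite gt_eqF.
rewrite normrM [`|eps^-1|]gtr0_norm ?invr_gt0 // ltr_pdivrMr // mul1r.
by [].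
Qed.

Lemma pigeon (F : nat -> 'M[R]_2) (I : nat -> Prop) (Bd eps : R) : 0 < eps ->
  (forall N, exists n, (N <= n)%N /\ I n) ->
  (forall n, I n -> forall i j, `|F n i j| <= Bd) ->
  exists n m, [/\ n <> m, I n, I m & forall i j, `|F n i j - F m i j| < eps].
Proof.
move=> he hI hB.
have [phi hphi] := choice hI.
pose psi := fix psi k := if k is k'.+1 then phi (psi k').+1 else phi 0.
have psiI : forall k, I (psi k) by case => [|k] /=; apply hphi.
have psiS : forall k, (psi k < psi k.+1)%N by move=> k /=; exact: (hphi _).1.
have psi_lt : forall k l, (k < l)%N -> (psi k < psi l)%N.
  move=> k; elim => [|l IH] //; rewrite ltnS leq_eqVlt => /orP [/eqP ->|/IH h] //.
  exact: ltn_trans h (psiS l).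
pose T := {ffun 'I_2 * 'I_2 -> 'I_(cellK Bd eps).+1}.
pose f : 'I_(#|T|.+1) -> T := fun k => [ffun ij => cell Bd eps (F (psi k) ij.1 ij.2)].
have ninj : ~ injective f by move/leq_card; rewrite card_ord ltnn.
have [k1 [k2 [e nk]]] : exists k1 k2, f k1 = f k2 /\ k1 <> k2.
  apply: contra_notP ninj => H k1 k2 e; apply: contra_notP H => nk.
  by exists k1, k2.
exists (psi k1), (psi k2); split => //.
- move=> E; apply: nk; apply: val_inj => /=.
  case: (ltngtP k1 k2) => // h.
    by move: (psi_lt _ _ h); rewrite E ltnn.
  by move: (psi_lt _ _ h); rewrite E ltnn.
- move=> i j; apply: (@cell_close Bd eps) => //.
  + exact: hB (psiI k1) i j.
  + exact: hB (psiI k2) i j.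
  by have := congr1 (fun f : T => f (i, j)) e; rewrite /f !ffunE /= => ->.
Qed.

End P.

Section C.
Variable R : realType.
Implicit Types g h : 'M[R]_2.

Lemma adj_mul g : \det g = 1 -> adjm g *m g = 1.
Proof. by move=> hd; rewrite -invmx_adj // mulVmx // unit_det1. Qed.

Lemma adj_psl g : \det g = 1 -> psl_id (adjm g) -> psl_id g.
Proof.
move=> hd [] e.
  by left; have := mul_adj hd; rewrite e mulmx1.
by right; have := mul_adj hd; rewrite e mulmxN mulmx1 => h; rewrite -[g]opprK h.
Qed.

Lemma ext_im g z : \det g = 1 -> 0 < z.2 -> (1 < Dm g z <-> (mob g z).2 < z.2).
Proof.
move=> hd hz; have D0 := Dm_pos hd hz.
rewrite mob_im // ltr_pdivrMr //; split => h; nra.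
Qed.

Lemma norm2 g (z : R * R) : \det g = 1 -> 0 < z.2 ->
  (mob g z).1 ^+ 2 + (mob g z).2 ^+ 2 =
  ((ma g * z.1 + mb g) ^+ 2 + (ma g * z.2) ^+ 2) / Dm g z.
Proof.
move=> hd hz; have D0 := Dm_pos hd hz.
move: D0; rewrite /mob /Dm /= => D0.
by field; rewrite lt0r_neq0.
Qed.

Variable G : set 'M[R]_2.
Hypothesis hF : fuchsian G.
Hypothesis hpar : forall g, G g -> ~ parabolic g.
Hypothesis hord0 : ordinary G None.

Lemma key gam z : G gam -> ~ psl_id gam -> Kset G z ->
  [/\ uhp (mob gam z), ~ Kset G (mob gam z) & (mob gam z).2 < z.2].
Proof.
move=> hG hn [hz hK].
have hd := Gdet hF hG.
have c0 : mc gam != 0 by apply/eqP => c0; apply: hn; exact: (c0_triv hF hpar hord0).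
have [_ hext] := hK gam hG hn c0.
have D1 := Dm_pos hd hz.
split.
- exact: mob_uhp.
- move=> [_ hK2].
  have hGa := Gadj hF hG.
  have hna : ~ psl_id (adjm gam) by move=> /(adj_psl hd).
  have ca : mc (adjm gam) != 0 by rewrite mc_adj oppr_eq0.
  have [_ hext2] := hK2 _ hGa hna ca.
  have := @Dm_mul _ (adjm gam) gam z (lt0r_neq0 D1).
  rewrite adj_mul // /Dm mc1 md1 !mul0r add0r expr1n expr0n /= addr0 -/(Dm gam z).
  rewrite -/(Dm (adjm gam) (mob gam z)) => e.
  have := hext2; rewrite -/(Dm (adjm gam) (mob gam z)).
  move: hext; rewrite -/(Dm gam z) => hext.
  nra.
- by apply/(ext_im hd hz).
Qed.

Lemma sq_bound (x K : R) : x ^+ 2 <= K -> `|x| <= 1 + K.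
Proof.
move=> h.
have e : `|x| ^+ 2 = x ^+ 2 by rewrite -normrX ger0_norm // sqr_ge0.
have n0 : 0 <= `|x| by [].
have k0 : 0 <= K by apply: le_trans (sqr_ge0 x) h.
nra.
Qed.

Lemma RB_contra (x0 : R) :
  (forall rho, 0 < rho -> exists del,
     [/\ G del, ~ psl_id del, 0 < `|mc del| < rho & Dm del (x0, 1) <= 1]) -> False.
Proof.
move=> H.
have H' : forall rho : R, exists del, 0 < rho ->
   [/\ G del, ~ psl_id del, 0 < `|mc del| < rho & Dm del (x0, 1) <= 1].
  move=> rho; case: (boolP (0 < rho)) => hr; first by have [d hd] := H _ hr; exists d.
  by exists 1.
have [f hf] := choice H'.
pose sd := fix sd n := if n is n'.+1 then f (`|mc (sd n')| / 2) else f 1.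
have two0 : (0 : R) < 2 by [].
have Psd : forall n, [/\ G (sd n), ~ psl_id (sd n), 0 < `|mc (sd n)| & Dm (sd n) (x0, 1) <= 1].
  elim => [|n IH] /=.
    by have [? ? /andP [? ?] ?] := hf 1 ltr01; split.
  have [_ _ hc _] := IH.
  by have [? ? /andP [? ?] ?] := hf (`|mc (sd n)| / 2) (divr_gt0 hc two0); split.
have dec : forall n, `|mc (sd n.+1)| < `|mc (sd n)|.
  move=> n; have [_ _ hc _] := Psd n.
  have [_ _ /andP [_ h] _] := hf (`|mc (sd n)| / 2) (divr_gt0 hc two0).
  have h2 : `|mc (sd n.+1)| < `|mc (sd n)| / 2 := h.
  lra.
have decr : forall n m, (n < m)%N -> `|mc (sd m)| < `|mc (sd n)|.
  move=> n; elim => [|m IH] //; rewrite ltnS leq_eqVlt => /orP [/eqP ->|/IH h] //.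
  exact: lt_trans (dec m) h.
have dist : forall n m, n <> m -> sd n <> sd m /\ sd n <> - sd m.
  have aux : forall n m, (n < m)%N -> sd n <> sd m /\ sd n <> - sd m.
    move=> n m h; have hd := decr _ _ h; split => E.
      by move: hd; rewrite E ltxx.
    by move: hd; rewrite E mcN normrN ltxx.
  move=> n m nm; case: (ltngtP n m) => h.
  - exact: aux.
  - have [h1 h2] := aux _ _ h; split => E; first by apply: h1.
    by apply: h2; rewrite E opprK.
  - by [].
have Gd : forall n, G (sd n) by move=> n; have [] := Psd n.
have Dd : forall n, \det (sd n) = 1.
  move=> n; exact: (@Gdet _ G hF (sd n) (Gd n)).
have z0 : (0 : R) < (x0, 1).2 by [].
case: (pselect (forall M : R, \forall n \near \oo,
   M < (mob (sd n) (x0, 1)).1 ^+ 2 + (mob (sd n) (x0, 1)).2 ^+ 2)) => [hA|hA].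
  exact: (lp_contra hord0 z0 Gd dist hA).
move: hA => /existsNP [M hM].
pose I n := (mob (sd n) (x0, 1)).1 ^+ 2 + (mob (sd n) (x0, 1)).2 ^+ 2 <= M.
have inf : forall N, exists n, (N <= n)%N /\ I n.
  move=> N; apply: contrapT => hN; apply: hM; exists N => // n /= hn.
  rewrite ltNge; apply/negP => hle; apply: hN; by exists n.
have [e he hdisc] := hF.2 1 (G1 hF).
pose K := `|M|.
pose Bd := (2 + K) * (1 + `|x0|).
have bnd : forall n, I n -> forall i j, `|sd n i j| <= Bd.
  move=> n In.
  have D0 := Dm_pos (Dd n) z0.
  have [_ _ _ D1] := Psd n.
  move: In; rewrite /I (norm2 (Dd n) z0) /= ler_pdivrMr // => hP.
  have hMK : M * Dm (sd n) (x0, 1) <= K.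
    have : M <= K by exact: (ler_norm M).
    have : 0 <= K by exact: normr_ge0.
    nra.
  move: D1; rewrite /Dm /= mulr1 => D1.
  have ha : (ma (sd n)) ^+ 2 <= K.
    have := sqr_ge0 (ma (sd n) * x0 + mb (sd n)); rewrite mulr1 in hP; lra.
  have hv : (ma (sd n) * x0 + mb (sd n)) ^+ 2 <= K.
    have := sqr_ge0 (ma (sd n)); rewrite mulr1 in hP; lra.
  have hc : (mc (sd n)) ^+ 2 <= 1.
    have := sqr_ge0 (mc (sd n) * x0 + md (sd n)); lra.
  have hw : (mc (sd n) * x0 + md (sd n)) ^+ 2 <= 1.
    have := sqr_ge0 (mc (sd n)); lra.
  have k0 : 0 <= K by exact: normr_ge0.
  have x00 : 0 <= `|x0| by [].
  have ba := sq_bound ha; have bv := sq_bound hv; have bc := sq_bound hc; have bw := sq_bound hw.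
  apply: (@all4 _ (fun v => `|v| <= Bd)).
  - rewrite /Bd; nra.
  - have -> : mb (sd n) = (ma (sd n) * x0 + mb (sd n)) - ma (sd n) * x0 by ring.
    apply: le_trans (ler_normB _ _) _; rewrite normrM /Bd.
    have : 0 <= `|ma (sd n)| by []. nra.
  - rewrite /Bd; nra.
  - have -> : md (sd n) = (mc (sd n) * x0 + md (sd n)) - mc (sd n) * x0 by ring.
    apply: le_trans (ler_normB _ _) _; rewrite normrM /Bd.
    have : 0 <= `|mc (sd n)| by []. nra.
have Bd0 : 0 <= Bd by rewrite /Bd /K; apply: mulr_ge0; apply: addr_ge0.
pose eps := e / (2 * Bd + 1).
have eps0 : 0 < eps by rewrite /eps divr_gt0 // ltr_wpDl // mulr_ge0.
have [n [m [nm In Im hclose]]] := pigeon eps0 inf bnd.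
pose X := sd n; pose Y := sd m.
have hG : G (adjm X *m Y) by apply: Gmul hF _ _ (Gadj hF (Gd n)) (Gd m).
have E1 : adjm X *m Y - 1 = adjm X *m (Y - X).
  by rewrite mulmxBr adj_mul // Dd.
have badj : forall i j, `|adjm X i j| <= Bd.
  apply: (@all4 _ (fun v => `|v| <= Bd)); rewrite ?ma_adj ?mb_adj ?mc_adj ?md_adj ?normrN; exact: bnd.
have hY : forall i j, `|(Y - X) i j| < eps.
  by move=> i j; rewrite !mxE distrC; exact: hclose.
have h1 : adjm X *m Y = 1.
  apply: hdisc => // i j.
  have -> : (adjm X *m Y) i j - (1 : 'M[R]_2) i j = (adjm X *m Y - 1) i j by rewrite !mxE.
  rewrite E1 mxE sum2.
  apply: le_lt_trans (ler_normD _ _) _; rewrite !normrM.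
  have t1 := badj i ord0; have t2 := badj i ord_max.
  have u1 := hY ord0 j; have u2 := hY ord_max j.
  have : 0 <= `|(Y - X) ord0 j| by []. have : 0 <= `|(Y - X) ord_max j| by [].
  have : 0 <= `|adjm X i ord0| by []. have : 0 <= `|adjm X i ord_max| by [].
  have : eps * (2 * Bd + 1) = e by rewrite /eps divfK // gt_eqF // ltr_wpDl // mulr_ge0.
  nra.
have : X = Y.
  by have := congr1 (mulmx X) h1; rewrite mulmxA mul_adj ?Dd // mul1mx mulmx1.
by move=> E; have [] := dist _ _ nm.
Qed.

End C.

Lemma nbhsR2P (R : realType) (p : R * R) (B : set (R * R)) :
  nbhs p B <-> exists2 e : R, 0 < e & forall q : R * R, `|q.1 - p.1| < e -> `|q.2 - p.2| < e -> B q.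
Proof.
split.
  move=> /nbhs_ballP [e e0 H]; exists e => //.
  move=> q h1 h2; apply: H; split => /=; rewrite /ball /= distrC //.
move=> [e e0 H]; apply/nbhs_ballP; exists e => //.
move=> [q1 q2] [/= h1 h2]; apply: H; rewrite /= distrC //; move: h2; rewrite /ball /= distrC //.
Qed.

Section D.
Variable R : realType.
Implicit Types g h : 'M[R]_2.
Variable G : set 'M[R]_2.
Hypothesis hF : fuchsian G.
Hypothesis hpar : forall g, G g -> ~ parabolic g.
Hypothesis hord0 : ordinary G None.
Variables alpha beta : R.
Hypothesis hab : forall z, bdH (Kset G) z -> alpha <= z.1 <= beta.

Lemma nonK_strip (u : R * R) : uhp u -> ~ Kset G u -> alpha <= u.1 <= beta.
Proof.
move=> hu hnK.
have hu' : 0 < u.2 := hu.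
pose T := [set y : R | u.2 <= y /\ ~ Kset G (u.1, y)].
have Tu : T u.2 by split => //; rewrite -surjective_pairing.
case: (pselect (has_ubound T)) => hT.
- have hs : has_sup T by split => //; exists u.2.
  set s := sup T.
  have sub := sup_upper_bound hs.
  have hs2 : u.2 <= s := sub _ Tu.
  apply: (hab (z := (u.1, s))); split; last split.
  + rewrite /uhp /=; lra.
  + move=> B /nbhsR2P [e e0 hB]; exists (u.1, s + e / 2); split.
      split; first by rewrite /uhp /=; lra.
      move=> g hg hn hc; apply: contrapT => he.
      have Ts : T (s + e / 2).
        split; first by lra.
        by move=> [_ hK]; apply: he; apply: hK.
      have h1 : s + e / 2 <= s := sub _ Ts.
      lra.
    apply: hB => /=; first by rewrite subrr normr0.
    have -> : s + e / 2 - s = e / 2 by ring.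
    rewrite ger0_norm; lra.
  + move=> /nbhsR2P [e e0 hB].
    have [y Ty hy] := sup_adherent e0 hs.
    have ys : y <= s := sub _ Ty.
    apply: Ty.2; apply: hB => /=; first by rewrite subrr normr0.
    rewrite -/s in hy; rewrite ler0_norm; lra.
- exfalso; apply: (@RB_contra _ G hF hord0 u.1) => rho hr.
  pose M := 1 + rho^-1.
  have [y [Ty My]] : exists y, T y /\ M < y.
    apply: contrapT => H; apply: hT; exists M => y Ty; rewrite leNgt; apply/negP => hy.
    by apply: H; exists y.
  have y0 : 0 < y by move: Ty.1; lra.
  have [g [hg hn hc hne]] : exists g, [/\ G g, ~ psl_id g, mc g != 0 & ~ isom_ext g (u.1, y)].
    apply: contrapT => H; apply: Ty.2; split; first by [].
    move=> g hg hn hc; apply: contrapT => he; apply: H; by exists g.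
  have hD : Dm g (u.1, y) <= 1.
    rewrite leNgt; apply/negP => h; apply: hne; split => //.
  exists g; split => //.
  + apply/andP; split; first by rewrite normr_gt0.
    move: hD; rewrite /Dm /= => hD.
    have rinv : 0 < rho^-1 by rewrite invr_gt0.
    have e1 : rho * rho^-1 = 1 by rewrite mulfV // gt_eqF.
    have ec : `|mc g| ^+ 2 = mc g ^+ 2 by rewrite -normrX ger0_norm // sqr_ge0.
    have n0 : 0 <= `|mc g| by [].
    have := sqr_ge0 (mc g * u.1 + md g) => hq.
    rewrite /M in My.
    have h1 : (`|mc g| * y) ^+ 2 <= 1 by rewrite exprMn ec -exprMn; lra.
    have h2 : `|mc g| * y <= 1 by nra.
    have h3 : 1 < rho * y.
      have : rho * rho^-1 < rho * y by rewrite ltr_pM2l //; lra.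
      by rewrite e1.
    rewrite ltNge; apply/negP => h4.
    nra.
  + move: hD; rewrite /Dm /= mulr1 => hD.
    rewrite /M in My.
    have : 0 < rho^-1 by rewrite invr_gt0.
    move=> ri; have hy1 : 1 <= y ^+ 2 by nra.
    have : mc g ^+ 2 * 1 <= mc g ^+ 2 * y ^+ 2 by rewrite ler_wpM2l ?sqr_ge0.
    rewrite exprMn in hD; lra.
Qed.

End D.

Section E.
Variable R : realType.
Implicit Types g h : 'M[R]_2.

Lemma int_cases (n : int) : n != 0 -> (1 <= (n%:~R : R)) \/ ((n%:~R : R) <= -1).
Proof.
move=> n0; case: (ltgtP n 0) => h.
- right; have : (n <= -1)%R by rewrite -ltzD1 addNr.
  by rewrite -(ler_int R) => /le_trans; apply; rewrite intrN.
- left; have : (1 <= n)%R by rewrite -gtz0_ge1.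
  by rewrite -(ler_int R).
- by move: n0; rewrite h eqxx.
Qed.

Variable G : set 'M[R]_2.
Hypothesis hF : fuchsian G.
Hypothesis hpar : forall g, G g -> ~ parabolic g.
Hypothesis hord0 : ordinary G None.
Variables alpha beta alpha' beta' : R.
Hypothesis hab : forall z, bdH (Kset G) z -> alpha <= z.1 <= beta.
Hypothesis ha' : alpha' < alpha.
Hypothesis hb' : beta < beta'.
Hypothesis hba : alpha <= beta.

Definition tp (n : int) : 'M[R]_2 := transl (n%:~R * (beta' - alpha')).

Lemma tp_det n : \det (tp n) = 1. Proof. exact: transl_det. Qed.
Lemma mob_tp n z : mob (tp n) z = (z.1 + n%:~R * (beta' - alpha'), z.2).
Proof. exact: mob_tr. Qed.
Lemma mc_tp n : mc (tp n) = 0. Proof. exact: mc_tr. Qed.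
Lemma tpD n m : tp n *m tp m = tp (n + m).
Proof. by rewrite /tp translD intrD mulrDl. Qed.
Lemma tp0 : tp 0 = 1.
Proof. by rewrite /tp mul0r transl0. Qed.
Lemma tp1 : transl (beta' - alpha') = tp 1.
Proof. by rewrite /tp mul1r. Qed.
Lemma adj_tp n : adjm (tp n) = tp (- n).
Proof.
apply: mat2_eq; rewrite /tp ?ma_adj ?mb_adj ?mc_adj ?md_adj !(ma_tr, mb_tr, mc_tr, md_tr) ?oppr0 //.
by rewrite intrN mulNr.
Qed.
Lemma tp_comm_opp n g : tp n *m (- g) = - (tp n *m g).
Proof. exact: mulmxN. Qed.

Definition Wt := Wset G alpha' beta'.
Definition Vt := [set z : R * R | uhp z /\ exists m : int, Wt (mob (tp m) z)].

Lemma K_out z : uhp z -> (z.1 < alpha \/ beta < z.1) -> Kset G z.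
Proof.
move=> hz hout; apply: contrapT => hK.
have := nonK_strip hF hord0 hab hz hK => /andP [h1 h2].
by case: hout; lra.
Qed.

Lemma V_K z : Vt z -> Kset G z.
Proof.
move=> [hz [m hW]].
have [m0|m0] := eqVneq m 0.
  by move: hW; rewrite m0 tp0 mob1 => -[].
move: hW; rewrite mob_tp => -[_ /= /andP [h1 h2]].
apply: K_out => //.
have l0 : 0 < beta' - alpha' by lra.
case: (int_cases m0); move: h1 h2; generalize (m%:~R : R) => M h1 h2 hm; [left | right].
  have : 0 <= (M - 1) * (beta' - alpha') by apply: mulr_ge0; lra.
  have := ha'; have := hb'; have := hba; nra.
have : 0 <= (- 1 - M) * (beta' - alpha') by apply: mulr_ge0; lra.
have := ha'; have := hb'; have := hba; nra.
Qed.

Lemma V_tp z n : Vt z -> Vt (mob (tp n) z).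
Proof.
move=> [hz [m hW]]; split; first by rewrite mob_tp.
exists (m - n); rewrite !mob_tp /=.
have -> : z.1 + n%:~R * (beta' - alpha') + (m - n)%:~R * (beta' - alpha') =
          z.1 + m%:~R * (beta' - alpha') by rewrite intrB; ring.
by move: hW; rewrite mob_tp.
Qed.

Lemma E_tp u n : uhp u -> ~ Kset G u -> n != 0 -> Kset G (mob (tp n) u).
Proof.
move=> hu hK n0.
have := nonK_strip hF hord0 hab hu hK => /andP [h1 h2].
apply: K_out; first by rewrite mob_tp.
rewrite mob_tp /=.
have l0 : 0 < beta' - alpha' by have := ha'; have := hb'; have := hba; lra.
case: (int_cases n0); generalize (n%:~R : R) => M hm; [right | left].
  have : 0 <= (M - 1) * (beta' - alpha') by apply: mulr_ge0; lra.
  have := ha'; have := hb'; have := hba; nra.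
have : 0 <= (- 1 - M) * (beta' - alpha') by apply: mulr_ge0; lra.
have := ha'; have := hb'; have := hba; nra.
Qed.


Lemma psl_opp g : psl_id (- g) -> psl_id g.
Proof. by case => e; [right | left]; rewrite -[g]opprK e ?opprK. Qed.

Inductive EW : 'M[R]_2 -> Prop :=
  | EWa gam (n : int) : G gam -> ~ psl_id gam -> EW (gam *m tp n)
  | EWb gam (n : int) e : G gam -> ~ psl_id gam -> n != 0 -> EW e ->
      EW (gam *m (tp n *m e)).

Definition Inv g := exists n : int,
  g = tp n \/ g = - tp n \/ exists e, EW e /\ g = tp n *m e.

Lemma EW_det e : EW e -> \det e = 1.
Proof.
elim => [gam n hg _|gam n e' hg _ _ _ IH].
  by rewrite det_mulmx tp_det (Gdet hF hg) mulr1.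
by rewrite !det_mulmx tp_det IH (Gdet hF hg) !mulr1.
Qed.

Lemma EW_opp e : EW e -> EW (- e).
Proof.
case => [gam n hg hn|gam n e' hg hn n0 he].
  rewrite -mulNmx; apply: EWa; first exact: Gopp hF _ hg.
  by move/psl_opp.
rewrite -mulNmx; apply: EWb => //; first exact: Gopp hF _ hg.
by move/psl_opp.
Qed.

Lemma Inv_tp s g : Inv g -> Inv (tp s *m g).
Proof.
move=> [n [E|[E|[e [he E]]]]]; exists (s + n); rewrite E.
- by left; rewrite tpD.
- by right; left; rewrite mulmxN tpD.
- by right; right; exists e; split => //; rewrite mulmxA tpD.
Qed.

Lemma psl_mul_cases del g : psl_id del -> del *m g = g \/ del *m g = - g.
Proof. by case => ->; [left; rewrite mul1mx | right; rewrite mulNmx mul1mx]. Qed.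

Lemma EW_left del e : G del -> EW e -> Inv (del *m e).
Proof.
move=> hd; case => [gam n hg hn|gam n e' hg hn n0 he].
  rewrite mulmxA; case: (pselect (psl_id (del *m gam))) => hp.
    exists n; case: (psl_mul_cases (tp n) hp) => ->; [left | right; left] => //.
  exists 0; right; right; exists ((del *m gam) *m tp n); split.
    by apply: EWa => //; exact: Gmul hF _ _ hd hg.
  by rewrite tp0 mul1mx.
rewrite mulmxA; case: (pselect (psl_id (del *m gam))) => hp.
  exists n; right; right.
  case: (psl_mul_cases (tp n *m e') hp) => ->.
    by exists e'.
  by exists (- e'); split; [exact: EW_opp | rewrite mulmxN].
exists 0; right; right; exists ((del *m gam) *m (tp n *m e')); split.
  by apply: EWb => //; exact: Gmul hF _ _ hd hg.
by rewrite tp0 mul1mx.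
Qed.

Lemma Inv_G del g : G del -> Inv g -> Inv (del *m g).
Proof.
move=> hd [n [E|[E|[e [he E]]]]]; rewrite E.
- case: (pselect (psl_id del)) => hp.
    exists n; case: (psl_mul_cases (tp n) hp) => ->; [left | right; left] => //.
  exists 0; right; right; exists (del *m tp n); split; first exact: EWa.
  by rewrite tp0 mul1mx.
- case: (pselect (psl_id del)) => hp.
    exists n; case: (psl_mul_cases (- tp n) hp) => ->; [right; left | left] => //.
    by rewrite opprK.
  exists 0; right; right; exists ((- del) *m tp n); split.
    by apply: EWa; [exact: Gopp hF _ hd | move/psl_opp].
  by rewrite tp0 mul1mx mulNmx mulmxN.
- have [n0|n0] := eqVneq n 0.
    by rewrite n0 tp0 mul1mx; exact: EW_left.
  case: (pselect (psl_id del)) => hp.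
    exists n; right; right.
    case: (psl_mul_cases (tp n *m e) hp) => ->.
      by exists e.
    by exists (- e); split; [exact: EW_opp | rewrite mulmxN].
  exists 0; right; right; exists (del *m (tp n *m e)); split; first exact: EWb.
  by rewrite tp0 mul1mx.
Qed.

Inductive Mon : 'M[R]_2 -> Prop :=
  | M1 : Mon 1
  | MG gam g : G gam -> Mon g -> Mon (gam *m g)
  | MT g : Mon g -> Mon (tp 1 *m g)
  | MTi g : Mon g -> Mon (tp (-1) *m g).

Lemma Mon_det g : Mon g -> \det g = 1.
Proof.
elim => [|gam h hg _ IH|h _ IH|h _ IH]; first by rewrite det1.
- by rewrite det_mulmx IH (Gdet hF hg) mulr1.
- by rewrite det_mulmx IH tp_det mulr1.
- by rewrite det_mulmx IH tp_det mulr1.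
Qed.

Lemma Mon_mul g h : Mon g -> Mon h -> Mon (g *m h).
Proof.
move=> Hg Hh; elim: Hg => [|gam g' hg _ IH|g' _ IH|g' _ IH]; first by rewrite mul1mx.
- by rewrite -mulmxA; apply: MG.
- by rewrite -mulmxA; apply: MT.
- by rewrite -mulmxA; apply: MTi.
Qed.

Lemma adjmM g h : adjm (g *m h) = adjm h *m adjm g.
Proof.
by apply: mat2_eq; rewrite ?maM ?mbM ?mcM ?mdM ?ma_adj ?mb_adj ?mc_adj ?md_adj ?maM ?mbM ?mcM ?mdM; ring.
Qed.

Lemma adjm1 : adjm (1 : 'M[R]_2) = 1.
Proof. by apply: mat2_eq; rewrite ?ma_adj ?mb_adj ?mc_adj ?md_adj ?ma1 ?mb1 ?mc1 ?md1 ?oppr0. Qed.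

Lemma Mon_adj g : Mon g -> Mon (adjm g).
Proof.
elim => [|gam h hg _ IH|h _ IH|h _ IH]; first by rewrite adjm1; exact: M1.
- rewrite adjmM; apply: Mon_mul => //.
  by rewrite -[adjm gam]mulmx1; apply: MG; [exact: Gadj | exact: M1].
- rewrite adjmM adj_tp; apply: Mon_mul => //.
  by rewrite -[tp (- 1)]mulmx1; apply: MTi; exact: M1.
- rewrite adjmM adj_tp opprK; apply: Mon_mul => //.
  by rewrite -[tp 1]mulmx1; apply: MT; exact: M1.
Qed.

Lemma gen_Mon g : Gamma_W G alpha' beta' g -> Mon g.
Proof.
elim => [h [hR|hT]|| h _ IH| h k _ IH1 _ IH2| h _ IH].
- by rewrite -[h]mulmx1; apply: MG; [case: hR | exact: M1].
- by rewrite hT tp1 -[tp 1]mulmx1; apply: MT; exact: M1.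
- exact: M1.
- have -> : - h = (- 1) *m h by rewrite mulNmx mul1mx.
  by apply: MG => //; exact: Gopp hF _ (G1 hF).
- exact: Mon_mul.
- by rewrite invmx_adj ?Mon_det //; exact: Mon_adj.
Qed.

Lemma Mon_Inv g : Mon g -> Inv g.
Proof.
elim => [|gam h hg _ IH|h _ IH|h _ IH].
- by exists 0; left; rewrite tp0.
- exact: Inv_G.
- exact: Inv_tp.
- exact: Inv_tp.
Qed.

Lemma EW_sem e : EW e -> forall z, Vt z ->
  [/\ uhp (mob e z), ~ Kset G (mob e z) & (mob e z).2 < z.2].
Proof.
elim => [gam n hg hn|gam n e' hg hn n0 he IH] z hV.
  have hz : 0 < z.2 by case: hV.
  rewrite mobM ?(Gdet hF hg) ?tp_det //.
  have hK := V_K (V_tp n hV).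
  have [h1 h2 h3] := key hF hpar hord0 hg hn hK.
  by split => //; move: h3; rewrite mob_tp.
have hz : 0 < z.2 by case: hV.
have [h1 h2 h3] := IH z hV.
rewrite mobM ?(Gdet hF hg) ?det_mulmx ?tp_det ?(EW_det he) ?mulr1 //.
rewrite mobM ?tp_det ?(EW_det he) //.
have hK := E_tp h1 h2 n0.
have [k1 k2 k3] := key hF hpar hord0 hg hn hK.
have k4 : (mob (tp n) (mob e' z)).2 = (mob e' z).2 by rewrite mob_tp.
split => //; rewrite k4 in k3; lra.
Qed.

Lemma W_ext g : Gamma_W G alpha' beta' g -> mc g != 0 ->
  forall z, Wt z -> isom_ext g z.
Proof.
move=> hg hc z hW.
have hM := gen_Mon hg.
have hd := Mon_det hM.
have hz : 0 < z.2 by case: hW => -[].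
have [n [E|[E|[e [he E]]]]] := Mon_Inv hM.
- by move: hc; rewrite E mc_tp eqxx.
- by move: hc; rewrite E mcN mc_tp oppr0 eqxx.
have hV : Vt z by split; [case: hW => -[] | exists 0; rewrite tp0 mob1].
have [h1 h2 h3] := EW_sem he hV.
split; first by [].
apply/(ext_im hd hz).
by rewrite E mobM ?tp_det ?(EW_det he) // mob_tp.
Qed.

End E.

Section G0.
Variable R : realType.
Implicit Types g h : 'M[R]_2.

Lemma lin_bound (A B C u v e : R) : `|u| < e -> `|v| < e -> e <= 1 -> 0 <= C ->
  A * u + B * v + C * u ^+ 2 + C * v ^+ 2 <= e * (`|A| + `|B| + 2 * C).
Proof.
move=> hu hv he hC.
have h1 : A * u <= `|A| * e.
  apply: le_trans (ler_norm _) _; rewrite normrM; apply: ler_wpM2l => //; exact: ltW.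
have h2 : B * v <= `|B| * e.
  apply: le_trans (ler_norm _) _; rewrite normrM; apply: ler_wpM2l => //; exact: ltW.
have eu : u ^+ 2 = `|u| ^+ 2 by rewrite -normrX ger0_norm // sqr_ge0.
have ev : v ^+ 2 = `|v| ^+ 2 by rewrite -normrX ger0_norm // sqr_ge0.
have n1 : 0 <= `|u| by []. have n2 : 0 <= `|v| by [].
have h3 : u ^+ 2 <= e by rewrite eu; nra.
have h4 : v ^+ 2 <= e by rewrite ev; nra.
have : C * u ^+ 2 <= C * e by apply: ler_wpM2l.
have : C * v ^+ 2 <= C * e by apply: ler_wpM2l.
nra.
Qed.

Lemma Dm_cont g (p : R * R) (eta : R) : 0 < eta -> exists2 e : R, 0 < e &
  forall q : R * R, `|q.1 - p.1| < e -> `|q.2 - p.2| < e -> Dm g q < Dm g p + eta.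
Proof.
move=> he.
set A := 2 * mc g * (mc g * p.1 + md g).
set B := 2 * mc g ^+ 2 * p.2.
set C := mc g ^+ 2.
set L := `|A| + `|B| + 2 * C + 1.
have L0 : 0 < L by rewrite /L ltr_pwDr // addr_ge0 // ?addr_ge0 // mulr_ge0 // /C sqr_ge0.
exists (Num.min 1 (eta / L)).
  by rewrite lt_min ltr01 divr_gt0.
move=> q h1 h2.
have hm1 : Num.min 1 (eta / L) <= 1 by rewrite ge_min lexx.
have hm2 : Num.min 1 (eta / L) <= eta / L by rewrite ge_min lexx orbT.
have := @lin_bound A B C (q.1 - p.1) (q.2 - p.2) _ h1 h2 hm1 (sqr_ge0 (mc g)).
rewrite -/C.
have -> : Dm g q = Dm g p + (A * (q.1 - p.1) + B * (q.2 - p.2) + C * (q.1 - p.1) ^+ 2 + C * (q.2 - p.2) ^+ 2).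
  by rewrite /Dm /A /B /C; ring.
move=> hb.
have : Num.min 1 (eta / L) * (`|A| + `|B| + 2 * C) < eta.
  have hC : 0 <= C by rewrite /C sqr_ge0.
  have hmin0 : 0 < Num.min 1 (eta / L) by rewrite lt_min ltr01 divr_gt0.
  have : Num.min 1 (eta / L) * L <= eta.
    by rewrite -ler_pdivlMr.
  rewrite /L; nra.
lra.
Qed.

Definition Sg g (z : R * R) := z.1 ^+ 2 + z.2 ^+ 2 + 2 * (md g / mc g) * z.1 + (md g ^+ 2 - 1) / mc g ^+ 2.

Lemma Dm_S g z : mc g != 0 -> Dm g z - 1 = mc g ^+ 2 * Sg g z.
Proof. by move=> hc; rewrite /Dm /Sg; field. Qed.

Lemma Dm1_S g z : mc g != 0 -> (Dm g z = 1 <-> Sg g z = 0).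
Proof.
move=> hc; have e := Dm_S z hc.
have c2 : mc g ^+ 2 != 0 by rewrite sqrf_eq0.
split => h.
  by apply/eqP; move: e; rewrite h subrr => /esym/eqP; rewrite mulf_eq0 (negbTE c2).
by apply/eqP; rewrite -subr_eq0 e h mulr0.
Qed.

Lemma circle_eq g h (p q : R * R) : mc g != 0 -> mc h != 0 -> p.1 != q.1 ->
  Dm g p = 1 -> Dm g q = 1 -> Dm h p = 1 -> Dm h q = 1 ->
  forall z, Dm g z = 1 <-> Dm h z = 1.
Proof.
move=> cg ch pq gp gq hp hq z.
rewrite !Dm1_S //.
move: gp gq hp hq; rewrite !Dm1_S // /Sg => gp gq hp hq.
have key : forall w, Sg g w - Sg h w = 2 * (md g / mc g - md h / mc h) * w.1 +
   ((md g ^+ 2 - 1) / mc g ^+ 2 - (md h ^+ 2 - 1) / mc h ^+ 2).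
  by move=> w; rewrite /Sg; ring.
have kp := key p; have kq := key q; have kz := key z.
rewrite /Sg in kp kq kz.
move: kp kq kz gp gq hp hq.
rewrite /Sg.
generalize (md g / mc g - md h / mc h) ((md g ^+ 2 - 1) / mc g ^+ 2 - (md h ^+ 2 - 1) / mc h ^+ 2).
move=> X Y kp kq kz gp gq hp hq.
have hX : X = 0.
  have : (2 * X) * (p.1 - q.1) = 0 by rewrite mulrBr; lra.
  move/eqP; rewrite mulf_eq0 subr_eq0 (negbTE pq) orbF mulf_eq0 => /orP [] /eqP //.
  by move=> h2; move: (@ltr0Sn R 1); rewrite h2 ltxx.
have hY : Y = 0 by move: kp; rewrite hX; lra.
rewrite hX hY mulr0 mul0r addr0 in kz.
by split => E; rewrite E in kz; lra.
Qed.


Lemma Dm_on g d (u : R * R) : mc g != 0 -> Dm g u = 1 ->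
  Dm d u = (mc d * u.1 + md d) ^+ 2 + mc d ^+ 2 * (1 - (mc g * u.1 + md g) ^+ 2) / mc g ^+ 2.
Proof.
move=> hc h.
have e : (mc g * u.2) ^+ 2 = 1 - (mc g * u.1 + md g) ^+ 2 by move: h; rewrite /Dm; lra.
rewrite /Dm -e; field; exact: hc.
Qed.

Lemma affine g d (u v w : R * R) (t : R) : mc g != 0 ->
  Dm g u = 1 -> Dm g v = 1 -> Dm g w = 1 -> w.1 = t * u.1 + (1 - t) * v.1 ->
  Dm d w = t * Dm d u + (1 - t) * Dm d v.
Proof.
move=> hc hu hv hw e.
rewrite (Dm_on d hc hu) (Dm_on d hc hv) (Dm_on d hc hw) e; field; exact: hc.
Qed.

Definition zt g (p q : R * R) (t : R) : R * R :=
  (t * p.1 + (1 - t) * q.1,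
   Num.sqrt (1 - (mc g * (t * p.1 + (1 - t) * q.1) + md g) ^+ 2) / `|mc g|).

Lemma arc_facts g (p q : R * R) (t : R) : mc g != 0 -> 0 < p.2 -> 0 < q.2 ->
  Dm g p = 1 -> Dm g q = 1 -> 0 <= t -> t <= 1 ->
  0 < (zt g p q t).2 /\ Dm g (zt g p q t) = 1.
Proof.
move=> hc hp hq gp gq t0 t1.
set a := mc g * p.1 + md g.
set b := mc g * q.1 + md g.
have pa : 0 < (mc g * p.2) ^+ 2 by rewrite exprn_even_gt0 // mulf_neq0 // gt_eqF.
have qa : 0 < (mc g * q.2) ^+ 2 by rewrite exprn_even_gt0 // mulf_neq0 // gt_eqF.
have ha : a ^+ 2 < 1 by move: gp; rewrite /Dm -/a; lra.
have hb : b ^+ 2 < 1 by move: gq; rewrite /Dm -/b; lra.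
have ex : mc g * (t * p.1 + (1 - t) * q.1) + md g = t * a + (1 - t) * b by rewrite /a /b; ring.
have conv : t * a ^+ 2 + (1 - t) * b ^+ 2 - (t * a + (1 - t) * b) ^+ 2 = t * (1 - t) * (a - b) ^+ 2.
  by ring.
have hs : 0 < 1 - (t * a + (1 - t) * b) ^+ 2.
  have : 0 <= t * (1 - t) * (a - b) ^+ 2 by rewrite mulr_ge0 ?sqr_ge0 // mulr_ge0 // subr_ge0.
  set m := Num.max (a ^+ 2) (b ^+ 2).
  have m1 : m < 1 by rewrite /m gt_max ha hb.
  have : t * a ^+ 2 <= t * m by rewrite ler_wpM2l // le_max lexx.
  have : (1 - t) * b ^+ 2 <= (1 - t) * m by rewrite ler_wpM2l ?subr_ge0 // le_max lexx orbT.
  lra.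
have cn : 0 < `|mc g| by rewrite normr_gt0.
rewrite /zt /= ex; split.
  by rewrite divr_gt0 // sqrtr_gt0.
rewrite /Dm /= ex.
have -> : (mc g * (Num.sqrt (1 - (t * a + (1 - t) * b) ^+ 2) / `|mc g|)) ^+ 2 =
   (mc g ^+ 2 / `|mc g| ^+ 2) * (Num.sqrt (1 - (t * a + (1 - t) * b) ^+ 2)) ^+ 2.
  by rewrite exprMn expr_div_n; ring.
rewrite sqr_sqrtr ?ltW // -normrX ger0_norm ?sqr_ge0 // divff ?sqrf_eq0 // mul1r.
ring.
Qed.

End G0.

Section G1.
Variable R : realType.
Implicit Types g h : 'M[R]_2.
Variable G : set 'M[R]_2.
Hypothesis hF : fuchsian G.
Hypothesis hpar : forall g, G g -> ~ parabolic g.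
Hypothesis hord0 : ordinary G None.
Variables alpha beta alpha' beta' : R.
Hypothesis hab : forall z, bdH (Kset G) z -> alpha <= z.1 <= beta.
Hypothesis ha' : alpha' < alpha.
Hypothesis hb' : beta < beta'.
Hypothesis hba : alpha <= beta.

Lemma bdHK_W z : bdH (Kset G) z -> bdH (Wset G alpha' beta') z.
Proof.
move=> hb; have /andP [h1 h2] := hab hb; case: hb => hz [hc hi].
have ha1 := ha'; have hb1 := hb'.
split => //; split.
- move=> B /nbhsR2P [e e0 hB].
  set e' := Num.min e (Num.min (z.1 - alpha') (beta' - z.1)).
  have e'0 : 0 < e' by rewrite !lt_min e0 !subr_gt0 /=; apply/andP; split; lra.
  have e'1 : e' <= e by rewrite ge_min lexx.
  have e'2 : e' <= z.1 - alpha' by rewrite /e' !ge_min lexx orbT.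
  have e'3 : e' <= beta' - z.1 by rewrite /e' !ge_min lexx !orbT.
  have : nbhs z [set q | `|q.1 - z.1| < e' /\ `|q.2 - z.2| < e'].
    by apply/nbhsR2P; exists e' => // q ? ?; split.
  move=> /hc [k [hk [k1 k2]]].
  exists k; split; last by apply: hB; lra.
  split => //=.
  move: k1; rewrite ltr_norml => /andP [k3 k4].
  apply/andP; split; lra.
- move=> hW; apply: hi; apply: filterS hW => q [].
  by [].
Qed.

Lemma clW_facts p : uhp p -> closure (Wset G alpha' beta') p ->
  (forall d, G d -> ~ psl_id d -> mc d != 0 -> 1 <= Dm d p) /\ alpha' <= p.1 <= beta'.
Proof.
move=> hp hcl; split.
- move=> d hd hn hc; rewrite leNgt; apply/negP => hlt.
  have h0 : 0 < 1 - Dm d p by rewrite subr_gt0.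
  have [e e0 he] := Dm_cont d p h0.
  have : nbhs p [set q | Dm d q < 1].
    apply/nbhsR2P; exists e => // q h1 h2 /=; have := he q h1 h2; lra.
  move=> /hcl [k [[[hk1 hK] _] hk]].
  have [_ ext] := hK d hd hn hc.
  have : 1 < Dm d k := ext.
  rewrite /= in hk; lra.
- apply/andP; split; rewrite leNgt; apply/negP => hlt.
  + have : nbhs p [set q : R * R | q.1 < alpha'].
      apply/nbhsR2P; exists (alpha' - p.1); first by rewrite subr_gt0.
      move=> q h1 _; move: h1; rewrite ltr_norml => /andP [_ h]; rewrite /=; lra.
    move=> /hcl [k [[_ /andP [k1 _]] k2]]; rewrite /= in k2; lra.
  + have : nbhs p [set q : R * R | beta' < q.1].
      apply/nbhsR2P; exists (p.1 - beta'); first by rewrite subr_gt0.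
      move=> q h1 _; move: h1; rewrite ltr_norml => /andP [h _]; rewrite /=; lra.
    move=> /hcl [k [[_ /andP [_ k1]] k2]]; rewrite /= in k2; lra.
Qed.

Lemma sub_dir S : REL G S -> REL_W G alpha' beta' S.
Proof.
move=> [g [hg ->]]; have [hG hn hc [z [w [[sz bz] [sw bw] zw]]]] := hg.
exists g; split => //.
- by apply: gen_base; left.
- by exists z, w; split => //; split => //; exact: bdHK_W.
Qed.

Lemma sup_dir S : REL_W G alpha' beta' S -> REL G S.
Proof.
move=> [g [hg hc [p [q [[sp bp] [sq bq] pq]]] ->]].
have [hp gp] := sp; have [hq gq] := sq.
have gp' : Dm g p = 1 := gp.
have gq' : Dm g q = 1 := gq.
have hp2 : 0 < p.2 := hp.
have hq2 : 0 < q.2 := hq.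
have [Fp /andP [p1 p2]] := clW_facts hp bp.2.1.
have [Fq /andP [q1 q2]] := clW_facts hq bq.2.1.
have pq1 : p.1 != q.1.
  apply/eqP => e; apply: pq.
  have e2 : (mc g * p.2) ^+ 2 = (mc g * q.2) ^+ 2 by move: gp' gq'; rewrite /Dm e; lra.
  have c2 : 0 < mc g ^+ 2 by rewrite exprn_even_gt0 // hc.
  have e3 : p.2 ^+ 2 = q.2 ^+ 2.
    by apply: (mulfI (lt0r_neq0 c2)); rewrite -!exprMn.
  have e4 : p.2 = q.2.
    apply/eqP; rewrite -subr_eq0; apply/eqP.
    have : (p.2 - q.2) * (p.2 + q.2) = 0 by rewrite -subr_sqr e3 subrr.
    move/eqP; rewrite mulf_eq0 => /orP [/eqP //|/eqP h].
    lra.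
  by apply: injective_projections.
pose z t := zt g p q t.
have arc : forall t, 0 <= t -> t <= 1 -> 0 < (z t).2 /\ Dm g (z t) = 1.
  by move=> t t0 t1; exact: arc_facts.
have aff : forall d t, 0 <= t -> t <= 1 -> Dm d (z t) = t * Dm d p + (1 - t) * Dm d q.
  move=> d t t0 t1; apply: (affine d hc gp' gq' (arc t t0 t1).2).
  by [].
have hDm : forall t, 0 <= t -> t <= 1 -> forall d, G d -> ~ psl_id d -> mc d != 0 ->
    1 <= Dm d (z t).
  move=> t t0 t1 d hd hn hcd; rewrite aff //.
  have := Fp d hd hn hcd; have := Fq d hd hn hcd; nra.
have hstrip : forall t, 0 < t -> t < 1 -> alpha' < (z t).1 < beta'.
  move=> t t0 t1; rewrite /z /zt /=.
  have ha1 := ha'; have hb1 := hb'.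
  case: (ltgtP p.1 q.1) => hpq; last by move: pq1; rewrite hpq eqxx.
    apply/andP; split; nra.
  apply/andP; split; nra.
have hnotK : forall t, 0 < t -> t < 1 -> ~ Kset G (z t).
  move=> t t0 t1 hK.
  have hW : Wset G alpha' beta' (z t) by split => //; exact: hstrip.
  have [_ ext] := W_ext hF hpar hord0 hab ha' hb' hba hg hc hW.
  have : 1 < Dm g (z t) := ext.
  by rewrite (arc t (ltW t0) (ltW t1)).2 ltxx.
have hbd : forall t, 0 < t -> t < 1 -> bdH (Kset G) (z t).
  move=> t t0 t1.
  have [y0 _] := arc t (ltW t0) (ltW t1).
  split; first exact: y0.
  split; last by move=> /interior_subset; exact: hnotK.
  move=> B /nbhsR2P [e e0 hB].
  exists ((z t).1, (z t).2 + e / 2); split; last first.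
    apply: hB => /=; first by rewrite subrr normr0.
    have -> : (z t).2 + e / 2 - (z t).2 = e / 2 by ring.
    rewrite ger0_norm; lra.
  have yy : 0 < (z t).2 + e / 2 by lra.
  split; first exact: yy.
  move=> d hd hn hcd; split; first exact: yy.
  have h1 := hDm t (ltW t0) (ltW t1) d hd hn hcd.
  have c2 : 0 < mc d ^+ 2 by rewrite exprn_even_gt0 // hcd.
  have : Dm d ((z t).1, (z t).2 + e / 2) = Dm d (z t) + mc d ^+ 2 * (2 * (z t).2 * (e / 2) + (e / 2) ^+ 2).
    have gen : forall x y s : R, Dm d (x, y + s) = Dm d (x, y) + mc d ^+ 2 * (2 * y * s + s ^+ 2).
      by move=> x y s; rewrite /Dm /=; ring.
    by rewrite gen -surjective_pairing.
  move=> E; change (1 < Dm d ((z t).1, (z t).2 + e / 2)); rewrite E.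
  have : 0 < mc d ^+ 2 * (2 * (z t).2 * (e / 2) + (e / 2) ^+ 2).
    by rewrite mulr_gt0 // ltr_pwDl ?sqr_ge0 // mulr_gt0 // mulr_gt0.
  lra.
have half0 : (0 : R) < 1 / 2 by [].
have half1 : (1 / 2 : R) < 1 by rewrite ltr_pdivrMr // mul1r ltr1n.
have [d [hd hn hcd hne]] : exists d, [/\ G d, ~ psl_id d, mc d != 0 & ~ isom_ext d (z (1 / 2))].
  apply: contrapT => H; apply: (hnotK _ half0 half1); split.
    exact: (arc _ (ltW half0) (ltW half1)).1.
  move=> d hd hn hcd; apply: contrapT => he; apply: H; by exists d.
have dm : Dm d (z (1 / 2)) <= 1.
  rewrite leNgt; apply/negP => h; apply: hne; split => //.
  exact: (arc _ (ltW half0) (ltW half1)).1.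
have dp := Fp d hd hn hcd; have dq := Fq d hd hn hcd.
have dm2 := aff d _ (ltW half0) (ltW half1).
have dp1 : Dm d p = 1 by move: dm; rewrite dm2; lra.
have dq1 : Dm d q = 1 by move: dm; rewrite dm2; lra.
have dall : forall t, 0 <= t -> t <= 1 -> Dm d (z t) = 1.
  by move=> t t0 t1; rewrite aff // dp1 dq1; ring.
exists d; split.
  split => //.
  have t13 : (0 : R) < 1 / 3 by [].
  have t13' : (1 / 3 : R) < 1 by rewrite ltr_pdivrMr // mul1r ltr1n.
  have t23 : (0 : R) < 2 / 3 by [].
  have t23' : (2 / 3 : R) < 1 by rewrite ltr_pdivrMr // mul1r ltr_nat.
  exists (z (1 / 3)), (z (2 / 3)); split.
  - split; last exact: hbd.
    by split; [exact: (arc _ (ltW t13) (ltW t13')).1 | exact: dall (ltW t13) (ltW t13')].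
  - split; last exact: hbd.
    by split; [exact: (arc _ (ltW t23) (ltW t23')).1 | exact: dall (ltW t23) (ltW t23')].
  - move=> /(congr1 fst); rewrite /z /zt /= => e.
    move: pq1; rewrite eq_sym; apply/negP; rewrite negbK; apply/eqP.
    have : (1 / 3 - 2 / 3) * (p.1 - q.1) = 0 :> R by move: e; lra.
    move/eqP; rewrite mulf_eq0 => /orP [/eqP h|/eqP h].
      by exfalso; move: h; lra.
    by move: h; lra.
apply/seteqP; split => w [hw ew]; split => //.
  by apply/(circle_eq hc hcd pq1 gp' gq' dp1 dq1).
by apply/(circle_eq hc hcd pq1 gp' gq' dp1 dq1).
Qed.

End G1.

Unset Implicit Arguments.

Theorem lemma4p7 (R : realType) (G : set 'M[R]_2)
  (hF : fuchsian G) (hGF : geom_finite G) (hnc : ~ cocompact G)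
  (hhyp : exists g, G g /\ hyperbolic g)
  (hpar : forall g, G g -> ~ parabolic g)
  (harea : infinite_area G) (hord : ordinary_nbhs_infty G)
  (alpha beta alpha' beta' : R)
  (hab : forall z, bdH (Kset G) z -> alpha <= z.1 <= beta)
  (halpha : forall a, (forall z, bdH (Kset G) z -> a <= z.1) -> a <= alpha)
  (hbeta : forall b, (forall z, bdH (Kset G) z -> z.1 <= b) -> beta <= b)
  (ha' : alpha' < alpha) (hb' : beta < beta') :
  REL G = REL_W G alpha' beta'.
Proof.
have hord0 : ordinary G None by case: hord => M [].
have hba : alpha <= beta.
  case: (pselect (exists z, bdH (Kset G) z)) => [[z hz]|hn].
    by have /andP [h1 h2] := hab z hz; apply: le_trans h2.
  have h := halpha (alpha + 1) (fun z hz => False_ind _ (hn (ex_intro _ z hz))).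
  lra.
apply/seteqP; split => S.
  exact: (sub_dir hab ha' hb').
exact: (sup_dir hF hpar hord0 hab ha' hb' hba).
Qed.
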